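(* Fix an integer $k\geq1$ and $V=\{0,\ldots,k\}$. If a Boolean function $\varphi$ on $V$ satisfies $\varphi\simeq\bot$, then $\varphi$ is fragmentable.
   Context: A valuation is a subset $\nu\subseteq V$; $\nu^{(l)}$ is $\nu$ with membership of $l$ flipped. A Boolean function on $V$ is a map $\varphi:2^V\to\{\text{false},\text{true}\}$; $\mathrm{sat}(\varphi)$ is its set of satisfying valuations; $\bot$ is the constant-false function. Write $\varphi\xrightarrow{+(\nu,l)}\varphi'$ if $\nu,\nu^{(l)}\notin\mathrm{sat}(\varphi)$ and $\mathrm{sat}(\varphi')=\mathrm{sat}(\varphi)\cup\{\nu,\nu^{(l)}\}$, and $\varphi\xrightarrow{-(\nu,l)}\varphi'$ if $\varphi'\xrightarrow{+(\nu,l)}\varphi$. Write $\varphi\xrightarrow{\pm}\varphi'$ if one of these holds for some $\nu,l$; $\simeq$ is the reflexive-transitive closure of $\xrightarrow{\pm}$ (an equivalence relation). $\varphi$ is degenerate if there is $l\in V$ with $\varphi(\nu)=\varphi(\nu^{(l)})$ for all $\nu$. Two functions are disjoint if no valuation satisfies both. A $\neg$-$\vee$-template is a Boolean circuit all of whose internal gates are $\neg$- or $\vee$-gates (a single leaf is allowed); its leaves $l_0,\ldots,l_n$ are holes. $T[\varphi_0,\ldots,\varphi_n]$ is obtained by substituting $\varphi_i$ for $l_i$; it is deterministic if, for every $\vee$-gate of the template, distinct inputs compute disjoint functions. $\varphi$ is fragmentable if there exist a template $T$ and degenerate $\varphi_0,\ldots,\varphi_n$ with $T[\varphi_0,\ldots,\varphi_n]$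 deterministic and equivalent to $\varphi$. *)

(* Defs.v *)
From mathcomp Require Import all_boot.
From Stdlib Require Import Relations.
Set Implicit Arguments. Unset Strict Implicit. Unset Printing Implicit Defensive.

(* Variables V = 'I_n ; valuations are subsets of V. *)
Definition valuation (n : nat) := {set 'I_n}.

Definition bfun (n : nat) := valuation n -> bool.

Definition flip n (nu : valuation n) (l : 'I_n) : valuation n :=
  if l \in nu then nu :\ l else l |: nu.

Definition sat n (phi : bfun n) : {set valuation n} := [set nu | phi nu].

Definition botf n : bfun n := fun _ => false.

Definition plus_step n (nu : valuation n) (l : 'I_n) (phi phi' : bfun n) : Prop :=
  nu \notin sat phi /\ flip nu l \notin sat phi /\
  sat phi' = sat phi :|: [set nu; flip nu l].

Definition minus_step n (nu : valuation n) (l : 'I_n) (phi phi' : bfun n) : Prop :=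
  plus_step nu l phi' phi.

Definition pm_step n (phi phi' : bfun n) : Prop :=
  exists nu l, plus_step nu l phi phi' \/ minus_step nu l phi phi'.

Definition simeq n : relation (bfun n) := clos_refl_trans (bfun n) (@pm_step n).

Definition degenerate n (phi : bfun n) : Prop :=
  exists l : 'I_n, forall nu, phi nu = phi (flip nu l).

Definition disjoint_fun n (phi psi : bfun n) : Prop :=
  forall nu, ~~ (phi nu && psi nu).

(* A neg-or template whose holes have already been filled with Boolean
   functions, i.e. T[phi_0, ..., phi_m]. *)
Inductive filled_template (n : nat) : Type :=
| Hole of bfun n
| NegG of filled_template n
| OrG of filled_template n & filled_template n.

Fixpoint eval n (T : filled_template n) : bfun n :=
  match T with
  | Hole phi => phi
  | NegG t => fun nu => ~~ eval t nu
  | OrG t1 t2 => fun nu => eval t1 nu || eval t2 nu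
  end.

Fixpoint deterministic n (T : filled_template n) : Prop :=
  match T with
  | Hole _ => True
  | NegG t => deterministic t
  | OrG t1 t2 => disjoint_fun (eval t1) (eval t2) /\ deterministic t1 /\ deterministic t2
  end.

Fixpoint holes_degenerate n (T : filled_template n) : Prop :=
  match T with
  | Hole phi => degenerate phi
  | NegG t => holes_degenerate t
  | OrG t1 t2 => holes_degenerate t1 /\ holes_degenerate t2
  end.

Definition fragmentable n (phi : bfun n) : Prop :=
  exists T : filled_template n,
    holes_degenerate T /\ deterministic T /\ forall nu, eval T nu = phi nu.

(* Main.v *)
Require Import Defs.
From mathcomp Require Import all_boot.
From Stdlib Require Import Relations.

Lemma flipK n (l : 'I_n) (x : valuation n) : flip (flip x l) l = x.
Proof.
rewrite {2}/flip; case: ifP => h; rewrite /flip.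
  by rewrite in_setD1 eqxx /= setD1K.
by rewrite in_setU1 eqxx /= setU1K // h.
Qed.

Definition edgef {n} (nu : valuation n) (l : 'I_n) : bfun n :=
  fun x => (x == nu) || (x == flip nu l).

Lemma edgef_deg n (nu : valuation n) (l : 'I_n) : degenerate (edgef nu l).
Proof.
exists l => x; rewrite /edgef.
have e : forall a b : valuation n, (a == flip b l) = (flip a l == b).
  move=> a b; apply/eqP/eqP => [->|<-]; by rewrite flipK.
have -> : (flip x l == flip nu l) = (x == nu).
  by apply/eqP/eqP => [h|->//]; rewrite -(@flipK n l x) h flipK.
rewrite e; exact: orbC.
Qed.

Lemma plus_pt n (nu : valuation n) (l : 'I_n) (phi phi' : bfun n) : plus_step nu l phi phi' ->
  (forall x, edgef nu l x -> ~~ phi x) /\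
  forall x, phi' x = phi x || edgef nu l x.
Proof.
move=> [h1 [h2 h3]]; split.
  move=> x /orP [] /eqP ->; [move: h1 | move: h2]; by rewrite inE.
move=> x; move/setP: h3 => /(_ x).
by rewrite !inE.
Qed.

Theorem proposition5p8 (k : nat) (hk : 1 <= k) (phi : bfun k.+1) :
  simeq phi (@botf k.+1) -> fragmentable phi.
Proof.
move/clos_rt_rt1n_iff => H.
remember (@botf k.+1) as b eqn:Eb.
induction H as [|x y z [nu [l [hs|hs]]] _ IH].
- subst; exists (Hole (@botf k.+1)); split => //; by exists ord0.
- have [T [hd [hdet hev]]] := IH Eb.
  have [hdis hpt] := plus_pt _ _ _ _ _ hs.
  exists (NegG (OrG (NegG T) (Hole (edgef nu l)))); split => /=.
    by split => //; apply: edgef_deg.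
  split; last by move=> w; rewrite hev hpt; case E: (edgef nu l w); [rewrite orbT (negbTE (hdis w E)) | rewrite !orbF negbK].
  split => // w; rewrite hev hpt; case E: (edgef nu l w); last by rewrite andbF.
  by rewrite orbT.
- have [T [hd [hdet hev]]] := IH Eb.
  have [hdis hpt] := plus_pt _ _ _ _ _ hs.
  exists (OrG T (Hole (edgef nu l))); split => /=.
    by split => //; apply: edgef_deg.
  split; last by move=> w; rewrite hev hpt.
  split => // w; rewrite hev; case E: (edgef nu l w); last by rewrite andbF.
  by rewrite andbT hdis.
Qed.
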